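(* Let $q=16$ and let $\mathbb D$ be the $3$-$(17,4,2)$ design $(U_{17},\mathcal B_4(\mathcal C_{\{3,5\}}^\perp|_{\mathrm{GF}(16)}))$. Then $12\le \dim_{16}\mathbb D\le 13$.
   Context: $U_{17}$ is the set of $17$-th roots of unity in $\mathrm{GF}(256)$; coordinates are indexed by $U_{17}$. With $q=16$, $\mathcal C_{\{3,5\}}=\{(a_3u^3+a_{q-2}u^{q-2}+a_5u^5+a_{q-4}u^{q-4})_{u\in U_{q+1}}: a_i\in\mathrm{GF}(q^2)\}$, $\mathcal C_{\{3,5\}}^\perp$ is its dual under the standard inner product, $\mathcal C^\perp_{\{3,5\}}|_{\mathrm{GF}(16)}=\mathcal C^\perp_{\{3,5\}}\cap\mathrm{GF}(16)^{17}$, and $\mathcal B_4(\mathcal C)$ is the set of supports of weight-$4$ codewords. The dimension $\dim_{16}\mathbb D$ is the minimum rank over $\mathrm{GF}(16)$ among all matrices obtained from the $(0,1)$ block-by-point incidence matrix of $\mathbb D$ by replacing each $1$ with an arbitrary nonzero element of $\mathrm{GF}(16)$. *)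

(* Defs.v *)
From HB Require Import structures.
From mathcomp Require Import all_boot all_order all_algebra all_field.
Set Implicit Arguments. Unset Strict Implicit. Unset Printing Implicit Defensive.
Import GRing.Theory.
Local Open Scope ring_scope.

(* U_17 : the 17-th roots of unity of F (F will be GF(256)). *)
Notation U17 F := {u : F | u ^+ 17 == 1}.

Definition C35 (F : finFieldType) : {set {ffun U17 F -> F}} :=
  [set c : {ffun U17 F -> F} | [exists a : F * F * F * F,
     c == [ffun u : U17 F => a.1.1.1 * (val u) ^+ 3 + a.1.1.2 * (val u) ^+ 14
                        + a.1.2 * (val u) ^+ 5 + a.2 * (val u) ^+ 12]]].

Definition C35dual (F : finFieldType) : {set {ffun U17 F -> F}} :=
  [set c : {ffun U17 F -> F} | [forall x in C35 F, \sum_(u : U17 F) c u * (x : {ffun U17 F -> F}) u == 0]].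

(* Restriction to GF(16): GF(16) is the image of K (#|K| = 16) under the
   field embedding f : K -> F; codewords of C^perp|_{GF(16)} are the vectors
   over K whose image under f lies in C^perp. *)
Definition C35dual_res (K F : finFieldType) (f : {rmorphism K -> F})
  : {set {ffun U17 F -> K}} :=
  [set c : {ffun U17 F -> K} | [ffun u => f (c u)] \in C35dual F].

Definition blocks4 (K F : finFieldType) (f : {rmorphism K -> F})
  : {set {set U17 F}} :=
  [set B : {set U17 F} | [exists c in C35dual_res f,
             (B == [set u | (c : {ffun U17 F -> K}) u != 0]) && (#|B| == 4)%N]].

Definition weighted_incidence (K F : finFieldType) (f : {rmorphism K -> F})
  (M : 'M[K]_(#|blocks4 f|, #|{: U17 F}|)) : bool :=
  [forall i, forall j,
     (M i j != 0) == (@enum_val _ (mem {: U17 F}) j \in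
                        @enum_val _ (mem (blocks4 f)) i)].

Definition dim16 (K F : finFieldType) (f : {rmorphism K -> F}) : nat :=
  \big[minn/#|{: U17 F}|]_(M : 'M[K]_(#|blocks4 f|, #|{: U17 F}|)
                            | @weighted_incidence K F f M) \rank M.

(* Main.v *)
Require Import Defs.
From HB Require Import structures.
From mathcomp Require Import all_boot all_order all_algebra all_field all_fingroup all_solvable.
From mathcomp Require Import ring zify.
Set Implicit Arguments. Unset Strict Implicit. Unset Printing Implicit Defensive.
Import GRing.Theory.
Local Open Scope ring_scope.
Definition m1 (F : ringType) (z : F) := z^+8 + z^+5 + z^+4 + z^+3 + 1.
Definition m2 (F : ringType) (z : F) := z^+8 + z^+7 + z^+6 + z^+4 + z^+2 + z + 1.

Lemma m1m2 (F : fieldType) (z : F) : (2 : F) = 0 -> z ^+ 17 = 1 -> z != 1 ->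
  m1 z = 0 \/ m2 z = 0.
Proof.
move=> h2 h17 h1.
have e : z ^+ 17 - 1 = (z - 1) * (m1 z * m2 z) + 2 * (z^+4 - z^+13).
  by rewrite /m1 /m2; ring.
move: e; rewrite h17 subrr h2 mul0r addr0 => /esym /eqP.
rewrite mulf_eq0 subr_eq0 (negbTE h1) /= mulf_eq0 => /orP[] /eqP; by [left|right].
Qed.
Lemma m1_z3 (F : comRingType) (z : F) : (2 : F) = 0 -> m2 z = 0 ->
  m1 (z ^+ 3) = 0.
Proof.
move=> h2 hm.
have e : m1 (z ^+ 3) = (1 + z + z^+3 + z^+6 + z^+8 + z^+10 + z^+13 + z^+15 + z^+16) * m2 z + 2 * (- z - z^+2 - z^+3 - z^+4 - z^+5 - z^+6 - 2 * z^+7 - 2 * z^+8 - z^+9 - 2 * z^+10 - z^+11 - z^+12 - z^+13 - 2 * z^+14 - z^+15 - 2 * z^+16 - 2 * z^+17 - z^+18 - z^+19 - z^+20 - z^+21 - z^+22 - z^+23).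
  by rewrite /m1 /m2; ring.
by rewrite e hm h2 mulr0 mul0r addr0.
Qed.

Lemma idE3 (F : comRingType) (z : F) : (2 : F) = 0 -> m1 z = 0 ->
  1 + z^+3 + z^+9 + (z^+2 + z^+5 + z^+11) * z^+15 = 0.
Proof.
move=> h2 hm.
have e : 1 + z^+3 + z^+9 + (z^+2 + z^+5 + z^+11) * z^+15 = (1 + z^+4 + z^+5 + z^+7 + z^+8 + z^+9 + z^+13 + z^+14 + z^+15 + z^+18) * m1 z + 2 * (- z^+4 - z^+5 - z^+7 - 2 * z^+8 - z^+9 - z^+10 - z^+11 - 2 * z^+12 - 2 * z^+13 - z^+14 - z^+15 - z^+16 - z^+17 - 2 * z^+18 - z^+19 - z^+21 - z^+22 - z^+23).
  by rewrite /m1 /m2; ring.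
by rewrite e hm h2 mulr0 mul0r addr0.
Qed.

Lemma idE5 (F : comRingType) (z : F) : (2 : F) = 0 -> m1 z = 0 ->
  1 + z^+5 + z^+15 + (z^+2 + z^+5 + z^+11) * z^+25 = 0.
Proof.
move=> h2 hm.
have e : 1 + z^+5 + z^+15 + (z^+2 + z^+5 + z^+11) * z^+25 = (1 + z^+3 + z^+4 + z^+6 + z^+8 + z^+10 + z^+11 + z^+14 + z^+15 + z^+17 + z^+18 + z^+19 + z^+23 + z^+24 + z^+25 + z^+28) * m1 z + 2 * (- z^+3 - z^+4 - z^+6 - z^+7 - 2 * z^+8 - z^+9 - z^+10 - 2 * z^+11 - z^+12 - z^+13 - 2 * z^+14 - z^+15 - z^+16 - z^+17 - 2 * z^+18 - 2 * z^+19 - z^+20 - z^+21 - 2 * z^+22 - 2 * z^+23 - z^+24 - z^+25 - z^+26 - z^+27 - 2 * z^+28 - z^+29 - z^+31 - z^+32 - z^+33).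
  by rewrite /m1 /m2; ring.
by rewrite e hm h2 mulr0 mul0r addr0.
Qed.

Lemma idE12 (F : comRingType) (z : F) : (2 : F) = 0 -> m1 z = 0 ->
  1 + z^+12 + z^+36 + (z^+2 + z^+5 + z^+11) * z^+60 = 0.
Proof.
move=> h2 hm.
have e : 1 + z^+12 + z^+36 + (z^+2 + z^+5 + z^+11) * z^+60 = (1 + z^+3 + z^+4 + z^+5 + z^+6 + z^+9 + z^+12 + z^+15 + z^+16 + z^+18 + z^+20 + z^+22 + z^+23 + z^+26 + z^+29 + z^+32 + z^+33 + z^+35 + z^+36 + z^+37 + z^+41 + z^+42 + z^+43 + z^+45 + z^+46 + z^+49 + z^+50 + z^+52 + z^+53 + z^+54 + z^+58 + z^+59 + z^+60 + z^+63) * m1 z + 2 * (- z^+3 - z^+4 - z^+5 - z^+6 - z^+7 - 2 * z^+8 - 2 * z^+9 - z^+10 - z^+11 - z^+12 - z^+13 - z^+14 - z^+15 - z^+16 - z^+17 - z^+18 - z^+19 - 2 * z^+20 - z^+21 - z^+22 - 2 * z^+23 - z^+24 - z^+25 - 2 * z^+26 - z^+27 - z^+28 - z^+29 - z^+30 - z^+31 - z^+32 - z^+33 - z^+34 - z^+35 - z^+36 - 2 * z^+37 - z^+38 - z^+39 - 2 * z^+40 - 2 * z^+41 - z^+42 - z^+43 - z^+44 - 2 * z^+45 - 2 * z^+46 - z^+47 - z^+48 - 2 * z^+49 - 2 * z^+50 - z^+51 - z^+52 - 2 * z^+53 - 2 * z^+54 - z^+55 - z^+56 - 2 * z^+57 -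 2 * z^+58 - z^+59 - z^+60 - z^+61 - z^+62 - 2 * z^+63 - z^+64 - z^+66 - z^+67 - z^+68).
  by rewrite /m1 /m2; ring.
by rewrite e hm h2 mulr0 mul0r addr0.
Qed.

Lemma idE14 (F : comRingType) (z : F) : (2 : F) = 0 -> m1 z = 0 ->
  1 + z^+14 + z^+42 + (z^+2 + z^+5 + z^+11) * z^+70 = 0.
Proof.
move=> h2 hm.
have e : 1 + z^+14 + z^+42 + (z^+2 + z^+5 + z^+11) * z^+70 = (1 + z^+3 + z^+4 + z^+5 + z^+6 + z^+9 + z^+14 + z^+18 + z^+19 + z^+21 + z^+22 + z^+26 + z^+31 + z^+35 + z^+36 + z^+38 + z^+39 + z^+42 + z^+43 + z^+45 + z^+46 + z^+47 + z^+51 + z^+52 + z^+53 + z^+55 + z^+56 + z^+59 + z^+60 + z^+62 + z^+63 + z^+64 + z^+68 + z^+69 + z^+70 + z^+73) * m1 z + 2 * (- z^+3 - z^+4 - z^+5 - z^+6 - z^+7 - 2 * z^+8 - 2 * z^+9 - z^+10 - z^+11 - z^+12 - z^+13 - z^+14 - z^+17 - z^+18 - z^+19 - z^+21 - 2 * z^+22 - z^+23 - z^+24 - z^+25 - 2 * z^+26 - z^+27 - z^+29 - z^+30 - z^+31 - z^+34 - z^+35 - z^+36 - z^+38 - 2 * z^+39 - z^+40 - z^+41 - z^+42 - 2 * z^+43 - z^+44 - z^+45 - 2 * z^+46 - 2 * z^+47 - z^+48 - z^+49 - 2 * z^+50 - 2 * z^+51 - z^+52 - z^+53 - z^+54 -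 2 * z^+55 - 2 * z^+56 - z^+57 - z^+58 - 2 * z^+59 - 2 * z^+60 - z^+61 - z^+62 - 2 * z^+63 - 2 * z^+64 - z^+65 - z^+66 - 2 * z^+67 - 2 * z^+68 - z^+69 - z^+70 - z^+71 - z^+72 - 2 * z^+73 - z^+74 - z^+76 - z^+77 - z^+78).
  by rewrite /m1 /m2; ring.
by rewrite e hm h2 mulr0 mul0r addr0.
Qed.

Lemma idW (F : comRingType) (z : F) : (2 : F) = 0 -> m1 z = 0 ->
  (z^+2 + z^+5 + z^+11)^+2 + (z^+2 + z^+5 + z^+11) + 1 = 0.
Proof.
move=> h2 hm.
have e : (z^+2 + z^+5 + z^+11)^+2 + (z^+2 + z^+5 + z^+11) + 1 = (1 + z^+2 + z^+3 + z^+5 + z^+8 + z^+9 + z^+10 + z^+11 + z^+14) * m1 z + 2 * (- z^+3 - z^+5 - z^+6 - 2 * z^+8 - z^+9 - z^+10 - z^+11 - z^+12 - z^+13 - 2 * z^+14 - z^+15 - z^+17 - z^+18 - z^+19).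
  by rewrite /m1 /m2; ring.
by rewrite e hm h2 mulr0 mul0r addr0.
Qed.
Definition u1 (F : finFieldType) : U17 F.
Proof. by exists 1; rewrite expr1n. Defined.

Definition pt (F : finFieldType) (z : F) (i : nat) : U17 F := insubd (u1 F) (z ^+ i).

Lemma val_pt (F : finFieldType) (z : F) i : z ^+ 17 = 1 -> val (pt z i) = z ^+ i.
Proof.
move=> h; rewrite /pt insubdK //.
by rewrite unfold_in /= -exprM mulnC exprM h expr1n.
Qed.

Lemma prim17 (F : finFieldType) (z : F) : z ^+ 17 = 1 -> z != 1 -> 17.-primitive_root z.
Proof.
move=> h h1; have [m pm dm] := prim_order_exists (isT : (0 < 17)%N) h.
have [_ /(_ m dm) /orP[] /eqP em] := @primeP 17%N isT; last by rewrite -em.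
by move: pm; rewrite em => /prim_expr_order; rewrite expr1 => e1; rewrite e1 eqxx in h1.
Qed.

Lemma pt_eq (F : finFieldType) (z : F) i j : 17.-primitive_root z ->
  (pt z i == pt z j) = (i == j %[mod 17])%N.
Proof.
move=> pz; have h := prim_expr_order pz.
by rewrite -val_eqE /= !val_pt // (eq_prim_root_expr pz).
Qed.

Lemma pt_eq_small (F : finFieldType) (z : F) i j : 17.-primitive_root z ->
  (i < 17)%N -> (j < 17)%N -> (pt z i == pt z j) = (i == j).
Proof. by move=> pz hi hj; rewrite pt_eq // !modn_small. Qed.

Lemma card_U17 (F : finFieldType) (z : F) : 17.-primitive_root z -> #|{: U17 F}| = 17%N.
Proof.
move=> pz; apply/eqP; rewrite eqn_leq; apply/andP; split.
  have hu : forall u : U17 F, val u ^+ 17 = 1 by move=> u; apply/eqP; exact: valP u.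
  pose g (u : U17 F) : 'I_17 := sval (prim_rootP pz (hu u)).
  have ginj : injective g.
    move=> u v e; apply: val_inj.
    rewrite (svalP (prim_rootP pz (hu u))) (svalP (prim_rootP pz (hu v))).
    by rewrite -/(g u) -/(g v) e.
  by have := @leq_card _ _ g ginj; rewrite card_ord.
pose g (i : 'I_17) : U17 F := pt z i.
have ginj : injective g.
  by move=> i j /eqP; rewrite /g pt_eq_small // => /eqP e; apply: val_inj.
by have := @leq_card _ _ g ginj; rewrite card_ord.
Qed.

Lemma char2 (F : finFieldType) : #|F| = 256%N -> (2 : F) = 0.
Proof.
move=> hF; have h : 2%N \in [pchar F] by apply: (@card_finPcharP F 2 8).
exact: pcharf0 h.
Qed.

Lemma unit_of_order (F : finFieldType) p : prime p -> (p %| #|F|.-1)%N ->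
  exists z : F, z ^+ p = 1 /\ z != 1.
Proof.
move=> pp hd.
have hd' : (p %| #|[set: {unit F}]|)%N by rewrite card_finField_unit.
have [x _ ox] := Cauchy pp hd'.
exists (val x); split.
  by rewrite -FinRing.val_unitX -ox expg_order.
apply/negP => /eqP h.
have x1 : x = 1%g by apply: val_inj; rewrite h.
by move: ox; rewrite x1 order1 => h1; rewrite -h1 in pp.
Qed.

Lemma good_z (F : finFieldType) : #|F| = 256%N ->
  exists z : F, [/\ z ^+ 17 = 1, z != 1 & m1 z = 0].
Proof.
move=> hF; have h2 := char2 hF.
have [z [h17 h1]] : exists z : F, z ^+ 17 = 1 /\ z != 1.
  by apply: unit_of_order => //; rewrite hF.
case: (m1m2 h2 h17 h1) => hm; first by exists z.
exists (z ^+ 3); split.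
- by rewrite -exprM mulnC exprM h17 expr1n.
- apply/negP => /eqP e; move/negP: h1; apply; apply/eqP.
  have -> : z = z * z ^+ 17 by rewrite h17 mulr1.
  by rewrite -exprS (_ : 18 = 3 * 6)%N // exprM e expr1n.
- exact: m1_z3.
Qed.

Definition om (F : ringType) (z : F) := z^+2 + z^+5 + z^+11.

Lemma good_w (K F : finFieldType) (f : {rmorphism K -> F}) (z : F) :
  #|K| = 16%N -> (2 : F) = 0 -> m1 z = 0 -> exists w : K, f w = om z.
Proof.
move=> hK h2 hm.
have [u [h3 h1]] : exists u : K, u ^+ 3 = 1 /\ u != 1.
  by apply: unit_of_order => //; rewrite hK.
have hu : u ^+ 2 + u + 1 = 0.
  have e : (u - 1) * (u ^+ 2 + u + 1) = u ^+ 3 - 1 by ring.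
  move: e; rewrite h3 subrr => /eqP; rewrite mulf_eq0 subr_eq0 (negbTE h1) /=.
  by move/eqP.
have hx : (f u) ^+ 2 + f u + 1 = 0.
  by have := congr1 f hu; rewrite rmorph0 !rmorphD rmorph1 rmorphXn.
have hw := idW h2 hm.
have e : (f u - om z) * (f u - om z - 1) =
   ((f u) ^+ 2 + f u + 1) + ((om z) ^+ 2 + om z + 1) - 2 * (f u + om z * f u + 1).
  by rewrite /om; ring.
move: e; rewrite hx /om hw h2 mul0r !addr0 subr0 => /eqP; rewrite mulf_eq0.
case/orP => /eqP e.
  by exists u; apply/eqP; rewrite -subr_eq0 e.
exists (u ^+ 2); rewrite rmorphXn.
move/eqP: e; rewrite subr_eq0 subr_eq => /eqP ->.
have e2 : (1 + om z) ^+ 2 = ((om z) ^+ 2 + om z + 1) + om z by rewrite /om; ring.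
by rewrite /om in e2; rewrite e2 hw add0r.
Qed.

Definition cw (K F : finFieldType) (z : F) (w : K) (s : nat) : {ffun U17 F -> K} :=
  [ffun u => if u == pt z s then 1 else if u == pt z (s + 1) then 1
             else if u == pt z (s + 3) then 1 else if u == pt z (s + 5) then w else 0].

Definition blk (F : finFieldType) (z : F) (s : nat) : {set U17 F} :=
  [set pt z s; pt z (s + 1); pt z (s + 3); pt z (s + 5)].

Lemma sum4 (T : finType) (R : ringType) (a b c d : T) (va vb vc vd : R) (h : T -> R) :
  [&& a != b, a != c, a != d, b != c, b != d & c != d] ->
  \sum_u ((if u == a then va else if u == b then vb else if u == c then vc
           else if u == d then vd else 0) * h u)
  = va * h a + vb * h b + vc * h c + vd * h d.
Proof.
case/and5P => ab ac ad bc /andP[bd cd].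
rewrite (bigD1 a) //= eqxx (bigD1 b) /=; last by rewrite eq_sym.
rewrite eq_sym (negbTE ab) eqxx (bigD1 c) /=; last by rewrite eq_sym ac eq_sym bc.
rewrite eq_sym (negbTE ac) eq_sym (negbTE bc) eqxx (bigD1 d) /=; last first.
  by rewrite eq_sym ad eq_sym bd eq_sym cd.
rewrite eq_sym (negbTE ad) eq_sym (negbTE bd) eq_sym (negbTE cd) eqxx.
rewrite big1 ?addr0 ?addrA // => u /andP[/andP[/andP[ua ub] uc] ud].
by rewrite (negbTE ua) (negbTE ub) (negbTE uc) (negbTE ud) mul0r.
Qed.

Lemma dist4 (F : finFieldType) (z : F) s : 17.-primitive_root z -> (s <= 11)%N ->
  [&& pt z s != pt z (s + 1), pt z s != pt z (s + 3), pt z s != pt z (s + 5),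
      pt z (s + 1) != pt z (s + 3), pt z (s + 1) != pt z (s + 5) &
      pt z (s + 3) != pt z (s + 5)].
Proof.
move=> pz hs; rewrite !pt_eq_small //; lia.
Qed.

Lemma cw_sum (K F : finFieldType) (f : {rmorphism K -> F}) (z : F) (w : K) s
  (h : U17 F -> F) : 17.-primitive_root z -> (s <= 11)%N ->
  \sum_u f (cw z w s u) * h u =
  h (pt z s) + h (pt z (s + 1)) + h (pt z (s + 3)) + f w * h (pt z (s + 5)).
Proof.
move=> pz hs.
under eq_bigr => u _ do rewrite ffunE !(fun_if f) rmorph1 rmorph0.
by rewrite sum4 ?dist4 // !mul1r.
Qed.

Lemma cw_dual (K F : finFieldType) (f : {rmorphism K -> F}) (z : F) (w : K) s :
  17.-primitive_root z -> (2 : F) = 0 -> m1 z = 0 -> f w = om z -> (s <= 11)%N ->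
  cw z w s \in C35dual_res f.
Proof.
move=> pz h2 hm fw hs.
have h17 := prim_expr_order pz.
rewrite inE inE; apply/forallP => x; apply/implyP.
rewrite inE => /existsP [[[[a1 a2] a3] a4] /eqP ->] /=.
rewrite (eq_bigr (fun u => f (cw z w s u) * (a1 * val u ^+ 3 + a2 * val u ^+ 14 + a3 * val u ^+ 5 + a4 * val u ^+ 12))); last by move=> u _; rewrite !ffunE.
have e := cw_sum f w (fun u => a1 * val u ^+ 3 + a2 * val u ^+ 14 + a3 * val u ^+ 5 + a4 * val u ^+ 12) pz hs.
cbv beta in e; rewrite e.
rewrite !val_pt // !exprD fw.
move: (z ^+ s) => y.
have E3 := idE3 h2 hm; have E5 := idE5 h2 hm; have E12 := idE12 h2 hm; have E14 := idE14 h2 hm.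
set e3 := 1 + z^+3 + _ + _ in E3.
set e5 := 1 + z^+5 + _ + _ in E5.
set e12 := 1 + z^+12 + _ + _ in E12.
set e14 := 1 + z^+14 + _ + _ in E14.
apply/eqP.
have -> : a1 * y ^+ 3 + a2 * y ^+ 14 + a3 * y ^+ 5 + a4 * y ^+ 12 +
  (a1 * (y * z ^+ 1) ^+ 3 + a2 * (y * z ^+ 1) ^+ 14 + a3 * (y * z ^+ 1) ^+ 5 + a4 * (y * z ^+ 1) ^+ 12) +
  (a1 * (y * z ^+ 3) ^+ 3 + a2 * (y * z ^+ 3) ^+ 14 + a3 * (y * z ^+ 3) ^+ 5 + a4 * (y * z ^+ 3) ^+ 12) +
  om z * (a1 * (y * z ^+ 5) ^+ 3 + a2 * (y * z ^+ 5) ^+ 14 + a3 * (y * z ^+ 5) ^+ 5 + a4 * (y * z ^+ 5) ^+ 12)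
  = a1 * y ^+ 3 * e3 + a2 * y ^+ 14 * e14 + a3 * y ^+ 5 * e5 + a4 * y ^+ 12 * e12.
  by rewrite /e3 /e5 /e12 /e14 /om; ring.
by rewrite E3 E5 E12 E14 !mulr0 !addr0.
Qed.

Lemma supp_cw (K F : finFieldType) (z : F) (w : K) s : w != 0 ->
  [set u | cw z w s u != 0] = blk z s.
Proof.
move=> w0; apply/setP => u; rewrite !inE ffunE.
by case: (u == pt z s); case: (u == pt z (s + 1)); case: (u == pt z (s + 3));
   case: (u == pt z (s + 5)); rewrite ?oner_eq0 ?w0 ?eqxx.
Qed.

Lemma card_blk (F : finFieldType) (z : F) s : 17.-primitive_root z -> (s <= 11)%N ->
  #|blk z s| = 4%N.
Proof.
move=> pz hs; have := dist4 pz hs.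
case/and5P => ab ac ad bc /andP[bd cd].
rewrite /blk -!setUA !cardsU1 cards1 !inE.
by rewrite (negbTE ab) (negbTE ac) (negbTE ad) (negbTE bc) (negbTE bd) (negbTE cd).
Qed.

Lemma blk_in (K F : finFieldType) (f : {rmorphism K -> F}) (z : F) (w : K) s :
  17.-primitive_root z -> (2 : F) = 0 -> m1 z = 0 -> f w = om z -> w != 0 -> (s <= 11)%N ->
  blk z s \in blocks4 f.
Proof.
move=> pz h2 hm fw w0 hs; rewrite inE; apply/existsP; exists (cw z w s).
by rewrite cw_dual // supp_cw // eqxx card_blk.
Qed.

Lemma rank_lb (K F : finFieldType) (f : {rmorphism K -> F}) (z : F) (w : K)
  (M : 'M[K]_(#|blocks4 f|, #|{: U17 F}|)) :
  17.-primitive_root z -> (2 : F) = 0 -> m1 z = 0 -> f w = om z -> w != 0 ->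
  weighted_incidence M -> (12 <= \rank M)%N.
Proof.
move=> pz h2 hm fw w0 wi.
have hB : forall s : 'I_12, blk z s \in blocks4 f.
  by move=> s; apply: (blk_in pz h2 hm fw w0); have := ltn_ord s; lia.
have hB0 := hB ord0.
pose r (s : 'I_12) := enum_rank_in hB0 (blk z s).
have hT0 : pt z 0 \in {: U17 F} by [].
pose c (t : 'I_12) : 'I_#|{: U17 F}| := enum_rank_in hT0 (pt z (t + 5)).
pose A := \matrix_(s, t) M (r s) (c t).
have rA : (\rank A <= \rank M)%N.
  have -> : A = rowsub r (colsub c M) by apply/matrixP => i j; rewrite !mxE.
  rewrite rowsubE (leq_trans (mxrankM_maxr _ _)) //.
  have -> : colsub c M = M *m colsub c 1%:M by rewrite mulmx_colsub mulmx1.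
  exact: mxrankM_maxl.
have key : forall s t : 'I_12, (A s t != 0) = (pt z (t + 5) \in blk z s).
  move=> s t; rewrite mxE.
  move/forallP: wi => /(_ (r s)) /forallP /(_ (c t)) /eqP ->.
  by rewrite (enum_rankK_in hB0 (hB s)) enum_rankK_in.
have trig : is_trig_mx A.
  apply/is_trig_mxP => s t st; apply/eqP; rewrite -[_ == 0]negbK key.
  have := ltn_ord s; have := ltn_ord t => hs ht.
  by rewrite !inE !pt_eq_small //; lia.
have dA : \det A != 0.
  rewrite det_trig //; apply/prodf_neq0 => s _.
  by rewrite key !inE eqxx !orbT.
have uA : A \in unitmx by rewrite unitmxE unitfE.
by move: rA; rewrite mxrank_unit.
Qed.

Definition exps (e : 'I_4) : nat := nth 0%N [:: 3; 14; 5; 12]%N e.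

Definition Gm (F : finFieldType) : 'M[F]_(#|{: U17 F}|, 4) :=
  \matrix_(j, e) val (@enum_val _ (mem {: U17 F}) j) ^+ exps e.

Definition o4 (k : nat) (h : (k < 4)%N) : 'I_4 := Ordinal h.

Lemma sum_I4 (R : nmodType) (g : 'I_4 -> R) :
  \sum_e g e = g (@o4 0 isT) + g (@o4 1 isT) + g (@o4 2 isT) + g (@o4 3 isT).
Proof.
rewrite !big_ord_recr big_ord0 /= add0r.
by congr (_ + _ + _ + _); congr g; apply: val_inj.
Qed.

Lemma rank_Gm (F : finFieldType) (z : F) : 17.-primitive_root z -> \rank (Gm F) = 4%N.
Proof.
move=> pz; have h17 := prim_expr_order pz.
rewrite -mxrank_tr; apply/eqP; apply: inj_row_free => v hv.
have hT0 : pt z 0 \in {: U17 F} by [].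
pose c0 := v 0 (@o4 0 isT); pose c1 := v 0 (@o4 1 isT).
pose c2 := v 0 (@o4 2 isT); pose c3 := v 0 (@o4 3 isT).
pose p : {poly F} := \poly_(i < 15) (if i == 3%N then c0 else if i == 14%N then c1
                     else if i == 5%N then c2 else if i == 12%N then c3 else 0).
have hp : forall x, p.[x] = c0 * x ^+ 3 + c1 * x ^+ 14 + c2 * x ^+ 5 + c3 * x ^+ 12.
  move=> x; rewrite horner_poly !big_ord_recr big_ord0 /=.
  rewrite !mul0r !add0r !addr0.
  by ring.
have p0 : p = 0.
  apply: (@roots_geq_poly_eq0 _ p [seq z ^+ i | i <- iota 0 17]).
  - apply/allP => x /mapP [i]; rewrite mem_iota /= => hi ->.
    rewrite /root hp.
    have := congr1 (fun m : 'M[F]_(1, #|{: U17 F}|) => m 0 (enum_rank_in hT0 (pt z i))) hv.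
    rewrite /= !mxE sum_I4 !mxE enum_rankK_in // val_pt //.
    by rewrite /exps /= => <-.
  - rewrite map_inj_in_uniq ?iota_uniq // => i j; rewrite !mem_iota /= => hi hj.
    by move/eqP; rewrite (eq_prim_root_expr pz) !modn_small // => /eqP.
  - by rewrite size_map size_iota (leq_trans (size_poly _ _)).
have cz : forall k, (k < 15)%N -> p`_k = 0 by move=> k _; rewrite p0 coef0.
have z0 := cz 3%N isT; have z1 := cz 14%N isT; have z2 := cz 5%N isT; have z3 := cz 12%N isT.
rewrite !coef_poly /= in z0 z1 z2 z3.
apply/rowP => k; rewrite mxE.
case: k => [[|[|[|[|//]]]] hk].
- by rewrite -z0 /c0; congr (v 0 _); apply: val_inj.
- by rewrite -z1 /c1; congr (v 0 _); apply: val_inj.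
- by rewrite -z2 /c2; congr (v 0 _); apply: val_inj.
- by rewrite -z3 /c3; congr (v 0 _); apply: val_inj.
Qed.

Lemma dual_sum (K F : finFieldType) (f : {rmorphism K -> F}) (c : {ffun U17 F -> K}) a1 a2 a3 a4 :
  c \in C35dual_res f ->
  \sum_u f (c u) * (a1 * val u ^+ 3 + a2 * val u ^+ 14 + a3 * val u ^+ 5 + a4 * val u ^+ 12) = 0.
Proof.
pose x := [ffun u : U17 F => a1 * val u ^+ 3 + a2 * val u ^+ 14 + a3 * val u ^+ 5 + a4 * val u ^+ 12].
rewrite !inE => /forallP /(_ x) /implyP H.
have hx : x \in C35 F by rewrite inE; apply/existsP; exists (a1, a2, a3, a4).
apply: etrans (eqP (H hx)); apply: eq_bigr => u _; rewrite !ffunE.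
done.
Qed.

Lemma dual_mono (K F : finFieldType) (f : {rmorphism K -> F}) (c : {ffun U17 F -> K}) (e : 'I_4) :
  c \in C35dual_res f -> \sum_u f (c u) * val u ^+ exps e = 0.
Proof.
move=> hc; case: e => [[|[|[|[|//]]]] he] /=; rewrite /exps /=.
- apply: (etrans _ (dual_sum 1 0 0 0 hc)); apply: eq_bigr => u _; congr (_ * _); by rewrite !mul0r ?addr0 ?add0r ?addr0 mul1r ?addr0.
- apply: (etrans _ (dual_sum 0 1 0 0 hc)); apply: eq_bigr => u _; congr (_ * _); by rewrite !mul0r ?addr0 ?add0r ?addr0 mul1r ?addr0.
- apply: (etrans _ (dual_sum 0 0 1 0 hc)); apply: eq_bigr => u _; congr (_ * _); by rewrite !mul0r ?addr0 ?add0r ?addr0 mul1r ?addr0.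
- apply: (etrans _ (dual_sum 0 0 0 1 hc)); apply: eq_bigr => u _; congr (_ * _); by rewrite !mul0r ?addr0 ?add0r ?addr0 mul1r ?addr0.
Qed.

Lemma rank_ub (K F : finFieldType) (f : {rmorphism K -> F}) (z : F) :
  17.-primitive_root z ->
  exists M : 'M[K]_(#|blocks4 f|, #|{: U17 F}|), weighted_incidence M /\ (\rank M <= 13)%N.
Proof.
move=> pz.
pose pk (i : 'I_#|blocks4 f|) :=
  [pick c : {ffun U17 F -> K} | (c \in C35dual_res f) &&
     ([set u | c u != 0] == @enum_val _ (mem (blocks4 f)) i)].
pose M0 : 'M[K]_(#|blocks4 f|, #|{: U17 F}|) := \matrix_(i, j)
  (if pk i is Some c then c (@enum_val _ (mem {: U17 F}) j) else 0).
exists M0; split.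
  apply/forallP => i; apply/forallP => j; rewrite mxE /pk.
  case: pickP => [c /andP[hc /eqP hs] | hn].
    by rewrite -hs inE.
  have := enum_valP i; rewrite inE => /existsP [c /andP [hc /andP[/eqP e _]]].
  by move: (hn c); rewrite hc e eqxx.
have hAG : map_mx f M0 *m Gm F = 0.
  apply/matrixP => i e; rewrite !mxE.
  under eq_bigr => j _ do rewrite !mxE.
  rewrite /pk; case: pickP => [c /andP [hc _] | _]; last first.
    by rewrite big1 // => j _; rewrite rmorph0 mul0r.
  apply: (etrans _ (dual_mono e hc)).
  rewrite -(big_enum_val (fun u => f (c u) * val u ^+ exps e)).
  by apply: eq_bigl.
have := mxrank_mul_min (map_mx f M0) (Gm F).
rewrite hAG mxrank0 mxrank_map (rank_Gm pz) leqn0 subn_eq0 => h.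
have h2 := leq_trans h (eq_leq (card_U17 pz)).
lia.
Qed.

Lemma bigmin_le_seq (I : eqType) (r : seq I) (P : pred I) (F : I -> nat) x j :
  j \in r -> P j -> (\big[minn/x]_(i <- r | P i) F i <= F j)%N.
Proof.
elim: r => [//|a r IH]; rewrite inE big_cons => /orP [/eqP -> | jr] pj.
  by rewrite pj geq_minl.
case: (P a); last exact: IH.
by rewrite (leq_trans (geq_minr _ _)) // IH.
Qed.

Local Close Scope ring_scope.

Theorem theorem32 (K F : finFieldType) (f : {rmorphism K -> F}) :
  #|K| = 16 -> #|F| = 256 -> 12 <= dim16 f <= 13.
Proof.
move=> hK hF.
have h2 := char2 hF.
have [z [h17 h1 hm]] := good_z hF.
have pz := prim17 h17 h1.
have [w fw] := good_w f hK h2 hm.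
have w0 : (w != 0)%R.
  apply/negP => /eqP w0; have := idW h2 hm; rewrite -/(om z) -fw w0 rmorph0.
  by rewrite expr0n /= !add0r => /eqP; rewrite oner_eq0.
apply/andP; split.
  rewrite /dim16; apply: (big_ind (fun n => 12 <= n)).
  - by rewrite (card_U17 pz).
  - by move=> x y hx hy; rewrite leq_min hx hy.
  - by move=> M wi; exact: (rank_lb pz h2 hm fw w0 wi).
have [M [wi hr]] := rank_ub f pz.
rewrite /dim16; apply: leq_trans hr.
by apply: bigmin_le_seq => //; rewrite mem_index_enum.
Qed.
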